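(* Let $P\subset\mathbb{R}^2$ be a finite point set of size $n$ satisfying the standing condition, let $X\subseteq P$ be its set of extreme points (given as input), and let $\varepsilon\in(0,1)$. The algorithm E-GRMR described in the context runs in $O(n^3)$ time.
   Context: For finite $Q \subset \mathbb{R}^2$ and unit $x$, $\omega(x,Q)=\max_{p\in Q}\langle p,x\rangle$. Standing condition: $\omega(x,P)>0$ for all $x\in\mathbb{S}^1$. Extreme points $X=\{t_1,\dots,t_m\}$ are the vertices of the convex hull of $P$ (the points that are top-ranked, $\langle p,x\rangle = \omega(x,P)$, for some nonzero $x$), indexed counterclockwise by polar angle, cyclically. Algorithm E-GRMR on input $(P,X,\varepsilon)$: (1) For each $i$, compute the unit vector $x^*_i$ with $\langle t_i,x\rangle=\langle t_{i+1},x\rangle$, $\langle t_i,x\rangle>0$; set $S=X$ and add to $S$ each $p\in P\setminus X$ for which some $i$ has $\langle p,x^*_i\rangle\ge(1-\varepsilon)\langle t_i,x^*_i\rangle$; index $S$ as $s_1,\dots,s_{|S|}$ counterclockwise by polar angle. (2) Build a directed graph $G$ on vertex set $S$: for each ordered pair $i\neq j$, skip if the counterclockwise angle from $s_i$ to $s_j$ is at least $\pi$; otherwise compute $l_{ij}=\max_{t\in X[s_i,s_j]}(1-\langle s_i,x^*\rangle/\langle t,x^*\rangle)$ (taken as $0$ if $X[s_i,s_j]$ is empty), where $X[s_i,s_j]$ is the set of extreme points with polar angle in the counterclockwise range from $s_i$ to $s_j$ inclusive and $x^*$ is the unit vector with $\langle s_i,x^*\rangle=\langle s_j,x^*\rangle$,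 $\langle s_i,x^*\rangle\ge0$; add edge $s_i\to s_j$ if $l_{ij}\le\varepsilon$. (3) Find a shortest directed cycle $C^*$ of $G$ by running Dijkstra's algorithm from each vertex, and return its vertex set. *)

(* Defs.v *)
From mathcomp Require Import all_boot all_order all_algebra.
From mathcomp Require Import reals trigo.
Set Implicit Arguments. Unset Strict Implicit. Unset Printing Implicit Defensive.
Import Order.TTheory GRing.Theory Num.Theory.

(* Cost model: a writer monad counting unit-cost primitive steps            *)
(* (real-RAM: one tick per primitive real operation / comparison /          *)
(*  constant-size geometric primitive, per array read/write, per list cell  *)
(*  traversed).                                                             *)
Definition M (A : Type) := (A * nat)%type.
Definition ret {A} (a : A) : M A := (a, 0%N).
Definition bind {A B} (m : M A) (f : A -> M B) : M B :=
  let (a, c) := m in let (b, d) := f a in (b, (c + d)%N).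
Definition tick {A} (a : A) : M A := (a, 1%N).
(* pay n steps (e.g. linear-time list shuffling) *)
Definition pay (n : nat) : M unit := (tt, n).
Definition cost {A} (m : M A) : nat := m.2.
Definition result {A} (m : M A) : A := m.1.

Notation "x <- m ;; k" := (bind m (fun x => k)) (at level 61, m at next level, right associativity).

Fixpoint mmap {A B} (f : A -> M B) (s : seq A) : M (seq B) :=
  match s with
  | [::] => ret [::]
  | x :: s' => y <- f x ;; ys <- mmap f s' ;; ret (y :: ys)
  end.

Fixpoint mfoldl {A B} (f : B -> A -> M B) (b : B) (s : seq A) : M B :=
  match s with
  | [::] => ret b
  | x :: s' => b' <- f b x ;; mfoldl f b' s'
  end.

Definition mexists {A} (f : A -> M bool) (s : seq A) : M bool :=
  mfoldl (fun b x => c <- f x ;; tick (b || c)) false s.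

Definition mfilter {A} (f : A -> M bool) (s : seq A) : M (seq A) :=
  bs <- mmap f s ;; _ <- pay (size s) ;; ret [seq p.1 | p <- zip s bs & p.2].

Fixpoint minsert {A} (le : A -> A -> M bool) (x : A) (s : seq A) : M (seq A) :=
  match s with
  | [::] => ret [:: x]
  | y :: s' => b <- le x y ;;
      if b then ret (x :: y :: s') else (r <- minsert le x s' ;; ret (y :: r))
  end.

Fixpoint msort {A} (le : A -> A -> M bool) (s : seq A) : M (seq A) :=
  match s with
  | [::] => ret [::]
  | x :: s' => r <- msort le s' ;; minsert le x r
  end.

Section Geometry.
Local Open Scope ring_scope.
Variable R : realType.
Definition pt := (R * R)%type.

Definition dotp (p x : pt) : R := p.1 * x.1 + p.2 * x.2.
Definition normp (p : pt) : R := Num.sqrt (p.1 ^+ 2 + p.2 ^+ 2).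
Definition is_unit (x : pt) : Prop := normp x = 1.

(* omega(x, Q) = max_{p in Q} <p, x>  (Q nonempty; -oo is irrelevant) *)
Definition omega (x : pt) (Q : seq pt) : R :=
  \big[Num.max/(dotp (head (0, 0) Q) x)]_(p <- Q) dotp p x.

Definition standing (P : seq pt) : Prop :=
  forall x : pt, is_unit x -> 0 < omega x P.

(* p is a vertex of the convex hull of P: the unique maximiser in P of
   some linear functional *)
Definition extreme_point (P : seq pt) (p : pt) : Prop :=
  p \in P /\ exists x : pt, x != (0, 0) /\
    forall q, q \in P -> q != p -> dotp q x < dotp p x.

(* polar angle in [0, 2 pi) *)
Definition polar (p : pt) : R :=
  if p == (0, 0) then 0 else
  let c := acos (p.1 / normp p) in
  if 0 <= p.2 then c else pi *+ 2 - c.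

Definition ccw (p q : pt) : R :=
  let d := polar q - polar p in if d < 0 then d + pi *+ 2 else d.

(* unit vector x with <p,x> = <q,x> and <p,x> >= 0 *)
Definition xstar (p q : pt) : pt :=
  let d := (q.1 - p.1, q.2 - p.2) in
  let r := normp d in
  let u := (- d.2 / r, d.1 / r) in
  if dotp p u < 0 then (- u.1, - u.2) else u.

Definition c_dot (p x : pt) : M R := tick (dotp p x).
Definition c_ccw (p q : pt) : M R := tick (ccw p q).
Definition c_xstar (p q : pt) : M pt := tick (xstar p q).
Definition c_eq (p q : pt) : M bool := tick (p == q).
Definition c_le_polar (p q : pt) : M bool := tick (polar p <= polar q).
Definition c_mem (p : pt) (s : seq pt) : M bool := mexists (c_eq p) s.

Definition step1 (P X : seq pt) (eps : R) : M (seq pt) :=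
  Xs <- msort c_le_polar X ;;
  _ <- pay (size Xs) ;;
  let pairs := zip Xs (rot 1 Xs) in
  xs <- mmap (fun pr => c_xstar pr.1 pr.2) pairs ;;
  _ <- pay (size Xs) ;;
  let txs := zip Xs xs in
  extra <- mfilter (fun p =>
      inX <- c_mem p X ;;
      if inX then ret false else
      mexists (fun tx =>
         a <- c_dot p tx.2 ;; b <- c_dot tx.1 tx.2 ;;
         tick ((1 - eps) * b <= a)) txs) P ;;
  _ <- pay (size X + size extra) ;;
  msort c_le_polar (X ++ extra).

Definition c_edge (X : seq pt) (eps : R) (i : nat) (si : pt) (j : nat) (sj : pt)
  : M bool :=
  if i == j then tick false else
  a <- c_ccw si sj ;;
  if pi <= a then tick false else
  x <- c_xstar si sj ;;
  l <- mfoldl (fun acc t =>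
         b <- c_ccw si t ;;
         if a < b then tick acc else
         u <- c_dot si x ;; v <- c_dot t x ;;
         tick (Num.max acc (1 - u / v))) 0 X ;;
  tick (l <= eps).

(* adjacency matrix as an array of rows *)
Definition step2 (X : seq pt) (eps : R) (S : seq pt) : M (seq (seq bool)) :=
  let k := size S in
  _ <- pay k ;;
  let IS := zip (iota 0 k) S in
  mmap (fun a => mmap (fun b => c_edge X eps a.1 a.2 b.1 b.2) IS) IS.

End Geometry.

Definition aget {A} (d : A) (a : seq A) (i : nat) : M A := tick (nth d a i).
Definition aset {A} (d : A) (a : seq A) (i : nat) (v : A) : M (seq A) :=
  tick (set_nth d a i v).
Definition adj_get (G : seq (seq bool)) (u v : nat) : M bool :=
  tick (nth false (nth [::] G u) v).

Record dstate := DState { dist : seq nat; pred : seq nat; vis : seq bool }.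

(* one round of (array-based) Dijkstra with unit edge weights on k vertices;
   inf := k.+1 represents infinity *)
Definition dijkstra_round (G : seq (seq bool)) (k : nat) (st : dstate)
  : M (option dstate) :=
  let inf := k.+1 in
  best <- mfoldl (fun (acc : option nat) i =>
            di <- aget inf (dist st) i ;; vi <- aget true (vis st) i ;;
            if vi || (inf <= di) then tick acc else
            match acc with
            | None => tick (Some i)
            | Some j => dj <- aget inf (dist st) j ;;
                        tick (if di < dj then Some i else Some j)
            end) None (iota 0 k) ;;
  match best with
  | None => ret None
  | Some u =>
    du <- aget inf (dist st) u ;;
    vis' <- aset false (vis st) u true ;;
    st' <- mfoldl (fun (s : dstate) v =>
             e <- adj_get G u v ;; vv <- aget true (vis s) v ;;
             dv <- aget inf (dist s) v ;;
             if e && ~~ vv && (du.+1 < dv) then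
               d' <- aset inf (dist s) v du.+1 ;; p' <- aset 0 (pred s) v u ;;
               ret (DState d' p' (vis s))
             else tick s) (DState (dist st) (pred st) vis') (iota 0 k) ;;
    ret (Some st')
  end.

Fixpoint dijkstra_loop (G : seq (seq bool)) (k fuel : nat) (st : dstate) : M dstate :=
  match fuel with
  | 0 => ret st
  | f.+1 => o <- dijkstra_round G k st ;;
            match o with None => ret st | Some st' => dijkstra_loop G k f st' end
  end.

Definition dijkstra (G : seq (seq bool)) (k s : nat) : M dstate :=
  _ <- pay (3 * k) ;;
  let st0 := DState (set_nth k.+1 (nseq k k.+1) s 0) (nseq k 0) (nseq k false) in
  dijkstra_loop G k k st0.

(* follow predecessors from u back to s (at most k steps): path s ... u *)
Fixpoint back_path (pr : seq nat) (s u fuel : nat) : M (seq nat) :=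
  match fuel with
  | 0 => ret [:: u]
  | f.+1 => if u == s then tick [:: u] else
            p <- aget 0 pr u ;; r <- back_path pr s p f ;; ret (rcons r u)
  end.

(* shortest directed cycle through s: (length, vertex indices), if any *)
Definition cycle_through (G : seq (seq bool)) (k s : nat) : M (option (nat * seq nat)) :=
  st <- dijkstra G k s ;;
  best <- mfoldl (fun (acc : option (nat * nat)) u =>
            e <- adj_get G u s ;; du <- aget k.+1 (dist st) u ;;
            if e && (du <= k) then
              tick (match acc with
                    | Some (l, w) => if du.+1 < l then Some (du.+1, u) else Some (l, w)
                    | None => Some (du.+1, u) end)
            else tick acc) None (iota 0 k) ;;
  match best with
  | None => ret None
  | Some (l, u) => p <- back_path (pred st) s u k ;; ret (Some (l, p))
  end.

Definition step3 {T} (d : T) (S : seq T) (G : seq (seq bool)) : M (seq T) :=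
  let k := size S in
  best <- mfoldl (fun (acc : option (nat * seq nat)) s =>
            c <- cycle_through G k s ;;
            tick (match acc, c with
                  | Some (l, p), Some (l', p') => if l' < l then Some (l', p') else Some (l, p)
                  | None, c => c
                  | a, None => a end)) None (iota 0 k) ;;
  match best with
  | None => ret [::]
  | Some (_, p) => _ <- pay (size p) ;; ret [seq nth d S i | i <- p]
  end.

Definition EGRMR {R : realType} (P X : seq (pt R)) (eps : R) : M (seq (pt R)) :=
  S <- step1 P X eps ;;
  G <- step2 X eps S ;;
  step3 (0, 0)%R S G.

(* Main.v *)
Require Import Defs.
From mathcomp Require Import all_boot all_order all_algebra.
From mathcomp Require Import reals.
From mathcomp Require Import zify.
Import Order.TTheory GRing.Theory Num.Theory.

Lemma cost_bind A B (m : M A) (f : A -> M B) :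
  cost (bind m f) = (cost m + cost (f (result m)))%N.
Proof. by case: m => a c; rewrite /bind /=; case: (f a). Qed.
Lemma result_bind A B (m : M A) (f : A -> M B) :
  result (bind m f) = result (f (result m)).
Proof. by case: m => a c; rewrite /bind /=; case: (f a). Qed.

Lemma mmap_cost A B (f : A -> M B) s c :
  (forall x, cost (f x) <= c) -> cost (mmap f s) <= size s * c.
Proof.
move=> H; elim: s => [|x s IH] //=.
rewrite !cost_bind /= addn0 mulSn; have := H x; lia.
Qed.
Lemma mmap_size A B (f : A -> M B) s : size (result (mmap f s)) = size s.
Proof. by elim: s => [|x s IH] //=; rewrite !result_bind /= IH. Qed.

Lemma mfoldl_spec A B (I : B -> Prop) (f : B -> A -> M B) c :
  (forall b x, I b -> I (result (f b x)) /\ cost (f b x) <= c) ->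
  forall s b, I b -> I (result (mfoldl f b s)) /\ cost (mfoldl f b s) <= size s * c.
Proof.
move=> H; elim => [|x s IH] b Ib /=; first by [].
rewrite result_bind cost_bind; have [I1 c1] := H b x Ib; have [I2 c2] := IH _ I1.
split => //; rewrite mulSn; lia.
Qed.
Lemma mfoldl_cost A B (f : B -> A -> M B) c s b :
  (forall b x, cost (f b x) <= c) -> cost (mfoldl f b s) <= size s * c.
Proof.
move=> H; have [] := @mfoldl_spec A B (fun _ => True) f c _ s b I => //.
Qed.
Lemma mexists_cost A (f : A -> M bool) c s :
  (forall x, cost (f x) <= c) -> cost (mexists f s) <= size s * c.+1.
Proof.
move=> H; apply: mfoldl_cost => b x; rewrite cost_bind /=; have := H x; lia.
Qed.
Lemma mfilter_cost A (f : A -> M bool) c s :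
  (forall x, cost (f x) <= c) -> cost (mfilter f s) <= size s * c.+1.
Proof.
move=> H; rewrite /mfilter !cost_bind /= addn0 mulnS; have := @mmap_cost _ _ f s c H; lia.
Qed.
Lemma mfilter_size A (f : A -> M bool) s : size (result (mfilter f s)) <= size s.
Proof.
rewrite /mfilter !result_bind /= size_map size_filter.
apply: leq_trans (count_size _ _) _; rewrite size_zip; lia.
Qed.
Lemma minsert_spec A (le : A -> A -> M bool) c x :
  (forall a b, cost (le a b) <= c) -> forall s,
  size (result (minsert le x s)) = (size s).+1 /\ cost (minsert le x s) <= size s * c.
Proof.
move=> H; elim => [|y s [IHs IHc]] //=.
rewrite result_bind cost_bind; case: (result (le x y)) => /=.
  by split => //; have := H x y; lia.
rewrite result_bind cost_bind /= IHs; split => //; have := H x y; lia.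
Qed.
Lemma msort_spec A (le : A -> A -> M bool) c :
  (forall a b, cost (le a b) <= c) -> forall s,
  size (result (msort le s)) = size s /\ cost (msort le s) <= size s * size s * c.
Proof.
move=> H; elim => [|y s [IHs IHc]] //=.
rewrite result_bind cost_bind; have [s1 c1] := @minsert_spec _ le c y H (result (msort le s)).
rewrite s1 IHs; split => //; rewrite IHs in c1; nia.
Qed.

Lemma cost_tick A (a : A) : cost (tick a) = 1. Proof. by []. Qed.
Lemma result_tick A (a : A) : result (tick a) = a. Proof. by []. Qed.
Lemma cost_ret A (a : A) : cost (ret a) = 0. Proof. by []. Qed.
Lemma result_ret A (a : A) : result (ret a) = a. Proof. by []. Qed.
Lemma cost_pay n : cost (pay n) = n. Proof. by []. Qed.
Lemma cost_aget A d (a : seq A) i : cost (aget d a i) = 1. Proof. by []. Qed.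
Lemma result_aget A d (a : seq A) i : result (aget d a i) = nth d a i. Proof. by []. Qed.
Lemma cost_aset A d (a : seq A) i v : cost (aset d a i v) = 1. Proof. by []. Qed.
Lemma result_aset A d (a : seq A) i v : result (aset d a i v) = set_nth d a i v. Proof. by []. Qed.
Lemma cost_adj G u v : cost (adj_get G u v) = 1. Proof. by []. Qed.
Lemma result_adj G u v : result (adj_get G u v) = nth false (nth [::] G u) v. Proof. by []. Qed.
Section G.
Variable R : realType.
Lemma cost_dot (p x : pt R) : cost (c_dot p x) = 1. Proof. by []. Qed.
Lemma result_dot (p x : pt R) : result (c_dot p x) = dotp p x. Proof. by []. Qed.
Lemma cost_ccw (p x : pt R) : cost (c_ccw p x) = 1. Proof. by []. Qed.
Lemma result_ccw (p x : pt R) : result (c_ccw p x) = ccw p x. Proof. by []. Qed.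
Lemma cost_xstar (p x : pt R) : cost (c_xstar p x) = 1. Proof. by []. Qed.
Lemma result_xstar (p x : pt R) : result (c_xstar p x) = xstar p x. Proof. by []. Qed.
Lemma cost_eq (p x : pt R) : cost (c_eq p x) = 1. Proof. by []. Qed.
Lemma cost_lep (p x : pt R) : cost (c_le_polar p x) = 1. Proof. by []. Qed.
End G.
Definition cE := (cost_bind, result_bind, cost_tick, result_tick, cost_ret, result_ret,
  cost_pay, cost_aget, result_aget, cost_aset, result_aset, cost_adj, result_adj,
  cost_dot, result_dot, cost_ccw, result_ccw, cost_xstar, result_xstar, cost_eq, cost_lep).

Lemma c_edge_cost (R : realType) (X : seq (pt R)) eps i si j sj :
  cost (c_edge X eps i si j sj) <= (size X * 4 + 3).
Proof.
rewrite /c_edge; case: (i == j); first by rewrite cE; lia.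
rewrite !cE; case: ifP => _; first by rewrite cE; lia.
rewrite !cE.
set F := (fun acc t => _).
have : cost (mfoldl F 0%R X) <= size X * 4.
  apply: mfoldl_cost => b x; rewrite /F !cE; case: ifP => _; rewrite !cE //.
lia.
Qed.

Lemma step2_cost (R : realType) (X : seq (pt R)) eps S :
  cost (step2 X eps S) <= size S + size S * (size S * (size X * 4 + 3)).
Proof.
rewrite /step2 !cE.
have := @mmap_cost _ _ (fun a => mmap (fun b => c_edge X eps a.1 a.2 b.1 b.2)
   (zip (iota 0 (size S)) S)) (zip (iota 0 (size S)) S) (size S * (size X * 4 + 3)).
rewrite size_zip size_iota minnn => h.
rewrite leq_add2l; apply: h.
move=> a; have := @mmap_cost _ _ (fun b => c_edge X eps a.1 a.2 b.1 b.2)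
   (zip (iota 0 (size S)) S) (size X * 4 + 3).
rewrite size_zip size_iota minnn; apply => b; exact: c_edge_cost.
Qed.

Lemma round_cost G k st : cost (dijkstra_round G k st) <= 10 * k + 2.
Proof.
rewrite /dijkstra_round cost_bind.
set F := (fun (acc : option nat) i => _).
have h1 : cost (mfoldl F None (iota 0 k)) <= size (iota 0 k) * 4.
  apply: mfoldl_cost => b x; rewrite /F !cE; case: ifP => _; rewrite ?cE //.
  by case: b => [j|]; rewrite !cE.
rewrite size_iota in h1.
case: (result _) => [u|]; rewrite ?cE; last by lia.
set F2 := (fun (s : dstate) v => _).
have : cost (mfoldl F2 (DState (dist st) (Defs.pred st) (set_nth false (vis st) u true)) (iota 0 k)) <= size (iota 0 k) * 6.
  apply: mfoldl_cost => b x; rewrite /F2 !cE; case: ifP => _; rewrite !cE //.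
rewrite size_iota; lia.
Qed.

Lemma loop_cost G k fuel st : cost (dijkstra_loop G k fuel st) <= fuel * (10 * k + 2).
Proof.
elim: fuel st => [|f IH] st //=.
rewrite cost_bind mulSn; have := round_cost G k st.
case: (result _) => [st'|]; rewrite ?cE; last lia.
have := IH st'; lia.
Qed.

Lemma back_path_spec pr s u fuel :
  size (result (back_path pr s u fuel)) <= fuel.+1 /\ cost (back_path pr s u fuel) <= fuel.
Proof.
elim: fuel u => [|f IH] u //.
change (back_path pr s u f.+1) with (if u == s then tick [:: u] else
  (p <- aget 0 pr u ;; r <- back_path pr s p f ;; ret (rcons r u))).
case: ifP => _; rewrite ?cE //.
rewrite size_rcons.
have [h1 h2] := IH (nth 0 pr u); lia.
Qed.

Definition cyc_ok (k : nat) (o : option (nat * seq nat)) :=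
  match o with Some (_, p) => size p <= k.+1 | None => true end.

Lemma cycle_spec G k s :
  cyc_ok k (result (cycle_through G k s)) /\
  cost (cycle_through G k s) <= 3 * k + k * (10 * k + 2) + k * 3 + k.
Proof.
rewrite /cycle_through result_bind cost_bind /dijkstra !cE.
have h1 := loop_cost G k k (DState (set_nth k.+1 (nseq k k.+1) s 0) (nseq k 0) (nseq k false)).
set st := result (dijkstra_loop _ _ _ _).
set F := (fun (acc : option (nat * nat)) u => _).
have h2 : cost (mfoldl F None (iota 0 k)) <= size (iota 0 k) * 3.
  apply: mfoldl_cost => b x; rewrite /F !cE; case: ifP => _; rewrite !cE //.
rewrite size_iota in h2.
case: (result (mfoldl F None (iota 0 k))) => [[l u]|]; rewrite ?cE; last by split => //; lia.
have [h3 h4] := back_path_spec (Defs.pred st) s u k.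
split => //; lia.
Qed.

Lemma step3_cost T (d : T) S G :
  cost (step3 d S G) <= size S * (3 * size S + size S * (10 * size S + 2) + size S * 3 + size S + 1) + (size S).+1.
Proof.
rewrite /step3 cost_bind.
set k := size S.
set F := (fun (acc : option (nat * seq nat)) s => _).
have step : forall b x, cyc_ok k b -> cyc_ok k (result (F b x)) /\ cost (F b x) <= 3 * k + k * (10 * k + 2) + k * 3 + k + 1.
  move=> b x ok; rewrite /F; cbv beta.
  move: (cycle_through G k x) (cycle_spec G k x) => c [c1 c2].
  rewrite cost_bind result_bind cost_tick result_tick.
  split; last lia.
  move: ok c1; case: (result c) => [[l' p']|];
    case: b => [[l p]|]; rewrite /cyc_ok //.
  by case: ifP.
have [h1 h2] := @mfoldl_spec _ _ (fun o => cyc_ok k o) F _ step (iota 0 k) None isT.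
rewrite size_iota in h2.
move: h1 h2; case: (result (mfoldl F None (iota 0 k))) => [[l p]|] h1 h2; rewrite ?cE /=; last lia.
rewrite /= in h1; lia.
Qed.

Lemma step1_spec (R : realType) (P X : seq (pt R)) eps :
  size (result (step1 P X eps)) <= size X + size P /\
  cost (step1 P X eps) <= size X * size X + size X + size X + size X
     + size P * (size X * 6).+1 + (size X + size P) + (size X + size P) * (size X + size P).
Proof.
have lep : forall a b : pt R, cost (c_le_polar a b) <= 1 by [].
rewrite /step1 cost_bind result_bind.
have [sXs cXs] := @msort_spec _ _ 1 lep X.
move: (msort (@c_le_polar R) X) sXs cXs => mXs sXs cXs.
rewrite cost_bind result_bind cost_pay.
rewrite cost_bind result_bind.
set pf := (fun pr : pt R * pt R => c_xstar pr.1 pr.2).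
have cmm := @mmap_cost _ _ pf (zip (result mXs) (rot 1 (result mXs))) 1 (fun _ => leqnn 1).
have smm := @mmap_size _ _ pf (zip (result mXs) (rot 1 (result mXs))).
move: (mmap pf _) cmm smm => mm cmm smm.
rewrite size_zip size_rot minnn sXs in cmm smm.
rewrite cost_bind result_bind cost_pay.
rewrite cost_bind result_bind.
set ff := (fun p : pt R => bind (c_mem p X) _).
have cff : forall p, cost (ff p) <= size X * 6.
  move=> p; rewrite /ff cost_bind.
  have c1 : cost (c_mem p X) <= size X * 2 := @mexists_cost _ (c_eq p) 1 X (fun _ => leqnn 1).
  case: (result _); rewrite ?cost_ret; first lia.
  set g := (fun tx => _).
  have c2 := @mexists_cost _ g 3 (zip (result mXs) (result mm)).
  have : cost (mexists g (zip (result mXs) (result mm))) <= size X * 4.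
    apply: leq_trans (c2 _) _; first by move=> x; rewrite /g !cE.
    rewrite size_zip sXs smm minnn; lia.
  lia.
have cfl := @mfilter_cost _ ff _ P cff.
have sfl := @mfilter_size _ ff P.
move: (mfilter ff P) cfl sfl => fl cfl sfl.
rewrite cost_bind result_bind cost_pay.
have [sS cS] := @msort_spec _ _ 1 lep (X ++ result fl).
rewrite sS size_cat; rewrite size_cat in cS.
split; first lia.
rewrite sXs.
have h1 : (size X + size (result fl)) * (size X + size (result fl)) <= (size X + size P) * (size X + size P).
  apply: leq_mul; lia.
lia.
Qed.

Lemma size_P_pos (R : realType) (P : seq (pt R)) : standing P -> (0 < size P)%N.
Proof.
case: P => [|//] H; exfalso.
have u : is_unit ((1, 0) : pt R)%R.
  by rewrite /is_unit /normp /= expr1n expr0n /= addr0 sqrtr1.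
have := H _ u; rewrite /omega big_nil /dotp /= !mul0r addr0 ltxx.
by [].
Qed.

Lemma theorem3_aux :
  exists C : nat,
  forall (R : realType) (P X : seq (pt R)) (eps : R),
    uniq P ->
    standing P ->
    uniq X ->
    (forall p : pt R, p \in X <-> extreme_point P p) ->
    (0 < eps < 1)%R ->
    (cost (EGRMR P X eps) <= C * (size P) ^ 3)%N.
Proof.
exists 200 => R P X eps uP stP uX hX _.
have n1 := @size_P_pos R P stP.
have mn : size X <= size P.
  apply: uniq_leq_size => // p /hX [].
  done.
rewrite /EGRMR.
have [sS cS] := @step1_spec R P X eps.
move: (step1 P X eps) sS cS => m1 sS cS.
rewrite cost_bind cost_bind.
have c2 := @step2_cost R X eps (result m1).
have c3 := @step3_cost _ (0, 0)%R (result m1) (result (step2 X eps (result m1))).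
move: c2 c3.
set k := size (result m1).
set m := size X.
set n := size P.
move=> c2 c3.
have kn : k <= 2 * n by lia.
move: cS c2 c3; rewrite -/m -/n => cS c2 c3.
move: (cost m1) (cost (step2 X eps (result m1))) (cost (step3 _ _ _)) cS c2 c3 => a b c cS c2 c3.
move: n1 mn sS; rewrite -/m -/n -/k => n1 mn sS.
clearbody k m n.
have e3 : n ^ 3 = n * (n * n) by rewrite !expnS expn0 muln1.
have n3 : n <= n * n by nia.
have nn : n * n <= n * (n * n) by nia.
have mm : m * m <= n * n by apply: leq_mul.
have mN : m * n <= n * n by apply: leq_mul.
have kk : k * k <= (2 * n) * (2 * n) by apply: leq_mul.
have kkk : k * (k * k) <= (2 * n) * ((2 * n) * (2 * n)) by apply: leq_mul.
have kkm : k * (k * m) <= (2 * n) * ((2 * n) * n) by apply: leq_mul => //; apply: leq_mul.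
rewrite e3; nia.
Qed.

Local Open Scope ring_scope.

Theorem theorem3 :
  exists C : nat,
  forall (R : realType) (P X : seq (pt R)) (eps : R),
    uniq P ->
    standing P ->
    uniq X ->
    (forall p : pt R, p \in X <-> extreme_point P p) ->
    0 < eps < 1 ->
    (cost (EGRMR P X eps) <= C * (size P) ^ 3)%N.
Proof. exact: theorem3_aux. Qed.
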